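(* For $n\ge 1$, the number of shallow $132$-avoiding involutions in $S_n$ (permutations with $\pi=\pi^{-1}$) equals $F_{n+1}$.
   Context: For $\pi\in S_n$: $D(\pi)=\sum_{i}|\pi_i-i|$, $I(\pi)$ is the number of inversions, $T(\pi)=n-\mathrm{cyc}(\pi)$ with $\mathrm{cyc}$ the number of cycles in the disjoint cycle decomposition; $\pi$ is shallow if $I(\pi)+T(\pi)=D(\pi)$. A permutation avoids a pattern $\sigma$ if it has no subsequence order-isomorphic to $\sigma$. $F_m$ are the Fibonacci numbers with $F_1=F_2=1$. *)

(* Defs.v *)
From mathcomp Require Import all_boot all_order all_fingroup.
Set Implicit Arguments. Unset Strict Implicit. Unset Printing Implicit Defensive.

(* Permutations of S_n are 'S_n = {perm 'I_n}; positions/values 0..n-1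
   (shifting by one does not change any of the statistics below). *)

Definition natdist (a b : nat) : nat := (a - b) + (b - a).

Definition Dstat n (s : 'S_n) : nat := \sum_(i < n) natdist (s i) i.

Definition Istat n (s : 'S_n) : nat :=
  #|[set p : 'I_n * 'I_n | (p.1 < p.2) && (s p.2 < s p.1)]|.

Definition cyc n (s : 'S_n) : nat := #|porbits s|.

Definition Tstat n (s : 'S_n) : nat := n - cyc s.

Definition shallow n (s : 'S_n) : bool := Istat s + Tstat s == Dstat s.

Definition contains_pattern n (sg : seq nat) (s : 'S_n) : bool :=
  [exists g : {ffun 'I_(size sg) -> 'I_n},
     [forall a : 'I_(size sg), forall b : 'I_(size sg),
        ((a < b) ==> (g a < g b)) &&
        ((nth 0 sg a < nth 0 sg b) == (s (g a) < s (g b)))]].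

Definition avoids n (sg : seq nat) (s : 'S_n) : bool := ~~ contains_pattern sg s.

Definition involution n (s : 'S_n) : bool := s^-1%g == s.

(* Fibonacci numbers with F_1 = F_2 = 1 (and F_0 = 0) *)
Fixpoint fib (m : nat) : nat :=
  match m with
  | 0 => 0
  | 1 => 1
  | (k.+1 as k1).+1 => fib k1 + fib k
  end.

(* Main.v *)
Require Import Defs.
From mathcomp Require Import all_boot all_order all_fingroup.
From mathcomp Require Import zify.
Set Implicit Arguments. Unset Strict Implicit. Unset Printing Implicit Defensive.

Lemma sum_interval N lo hi :
  \sum_(i < N) ((lo <= i) && (i < hi) : nat) = minn hi N - lo.
Proof.
elim: N => [|N IH]; first by rewrite big_ord0; lia.
rewrite big_ord_recr /= IH.
case: (leqP lo N) => /= h1; case: (ltnP N hi) => /= h2; lia.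
Qed.

Definition inv n (s : 'S_n) (p q : 'I_n) : bool := (p < q) && (s q < s p).
Definition row n (s : 'S_n) (p : 'I_n) : nat := \sum_(q < n) (inv s p q : nat).

Lemma IstatE n (s : 'S_n) : Istat s = \sum_(p < n) row s p.
Proof.
rewrite /Istat /row pair_big /= -sum1_card.
rewrite big_mkcond /=; apply: eq_bigr => -[p q] _ /=.
by rewrite inE /inv; case: ifP.
Qed.

Lemma invoP n (s : 'S_n) : involution s = [forall x, s (s x) == x].
Proof.
apply/eqP/forallP => [H x|H].
  by apply/eqP; have := permKV s x; rewrite H.
apply/permP => x; have := H x => /eqP E.
by have := permK s (s x); rewrite E.
Qed.

Definition cont n (s : 'S_n) : bool :=
  [exists a : 'I_n, exists b : 'I_n, exists c : 'I_n, [&& a < b, b < c, s a < s c & s c < s b]].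

Lemma contE n (s : 'S_n) : contains_pattern [:: 1; 3; 2] s = cont s.
Proof.
apply/existsP/existsP => [[g /forallP H]|[a /existsP [b /existsP [c /and4P [h1 h2 h3 h4]]]]].
  exists (g (@Ordinal 3 0 isT)); apply/existsP; exists (g (@Ordinal 3 1 isT)).
  apply/existsP; exists (g (@Ordinal 3 2 isT)).
  have H01 := forallP (H (@Ordinal 3 0 isT)) (@Ordinal 3 1 isT).
  have H02 := forallP (H (@Ordinal 3 0 isT)) (@Ordinal 3 2 isT).
  have H12 := forallP (H (@Ordinal 3 1 isT)) (@Ordinal 3 2 isT).
  have H21 := forallP (H (@Ordinal 3 2 isT)) (@Ordinal 3 1 isT).
  move: H01 H02 H12 H21 => /= /andP [-> _] /andP [_ /eqP <-] /andP [-> _] /eqP <-.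
  by [].
exists [ffun i : 'I_3 => nth a [:: a; b; c] i].
apply/forallP => -[[|[|[|i]]] Hi] //; apply/forallP => -[[|[|[|j]]] Hj] //=;
  rewrite !ffunE /= ?ltnn ?h1 ?h2 ?h3 ?h4 ?(ltn_trans h1 h2) ?(ltn_trans h3 h4) //=.
- by rewrite eq_sym ltnNge ltnW // (ltn_trans h3 h4).
- by rewrite eq_sym ltnNge ltnW.
- by rewrite eq_sym ltnNge ltnW.
Qed.

Lemma lift_permX n (i : 'I_n.+1) (s : 'S_n) m :
  ((lift_perm i i s) ^+ m)%g = lift_perm i i (s ^+ m)%g.
Proof.
elim: m => [|m IH]; first by rewrite !expg0 lift_perm1.
by rewrite !expgSr IH lift_permM.
Qed.

Lemma porbit_lift n (i : 'I_n.+1) (s : 'S_n) k :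
  porbit (lift_perm i i s) (lift i k) = [set lift i y | y in porbit s k].
Proof.
apply/setP => y; apply/porbitP/imsetP => [[m ->]|[z /porbitP [m ->] ->]].
  by exists ((s ^+ m)%g k); [apply: mem_porbit | rewrite lift_permX lift_perm_lift].
by exists m; rewrite lift_permX lift_perm_lift.
Qed.

Lemma porbit_fix T (s : {perm T}) x : s x = x -> porbit s x = [set x].
Proof.
move=> H; apply/setP => y; rewrite in_set1.
by apply/porbitP/eqP => [[m ->]|->]; [rewrite permX_fix | exists 0; rewrite expg0 perm1].
Qed.

Lemma setT_lift n (i : 'I_n.+1) :
  [set: 'I_n.+1] = i |: [set lift i k | k in [set: 'I_n]].
Proof.
apply/setP => x; rewrite !inE; case: (unliftP i x) => [k ->|->].
  by rewrite imset_f ?inE ?orbT.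
by rewrite eqxx.
Qed.

Lemma cyc_lift n (i : 'I_n.+1) (s : 'S_n) : cyc (lift_perm i i s) = (cyc s).+1.
Proof.
rewrite /cyc.
have E : porbits (lift_perm i i s) =
   [set i] |: [set [set lift i y | y in A] | A : {set 'I_n} in porbits s].
  apply/setP => X; rewrite inE; apply/imsetP/orP.
    case=> x _ ->; case: (unliftP i x) => [k ->|->].
      by right; rewrite porbit_lift; apply/imsetP; exists (porbit s k) => //;
        apply/imsetP; exists k.
    by left; rewrite porbit_fix ?lift_perm_id // set11.
  case => [/set1P ->| /imsetP [A HA ->]].
    by exists i => //; rewrite porbit_fix ?lift_perm_id.
  move: HA; rewrite /porbits => /imsetP [k _ ->].
  by exists (lift i k) => //; rewrite porbit_lift.
rewrite E cardsU1 card_imset; last exact: imset_inj (@lift_inj _ i).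
suff -> : [set i] \notin [set [set lift i y | y in A] | A : {set 'I_n} in porbits s] by [].
apply/imsetP => -[A _ H].
have : i \in [set i] by rewrite in_set1.
by rewrite H => /imsetP [y _ Ey]; move: (neq_lift i y); rewrite -Ey eqxx.
Qed.

Lemma cyc_le n (s : 'S_n) : cyc s <= n.
Proof. by rewrite /cyc /porbits (leq_trans (leq_imset_card _ _)) // card_ord. Qed.

Lemma maxlt n (q : 'I_n.+1) : (@ord_max n < q) = false.
Proof. by apply/negbTE; rewrite -leqNgt; exact: leq_ord. Qed.

Definition E1 n (r : 'S_n) : 'S_n.+1 := lift_perm ord_max ord_max r.

Lemma E1_max n (r : 'S_n) : E1 r ord_max = ord_max.
Proof. exact: lift_perm_id. Qed.

Lemma E1_lift n (r : 'S_n) k : E1 r (lift ord_max k) = lift ord_max (r k).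
Proof. exact: lift_perm_lift. Qed.

Lemma sum_recr n (F : 'I_n.+1 -> nat) :
  \sum_(i < n.+1) F i = \sum_(k < n) F (lift ord_max k) + F ord_max.
Proof.
rewrite big_ord_recr /=; congr (_ + _); apply: eq_bigr => k _; congr F.
by apply: val_inj; rewrite /= /bump leqNgt ltn_ord.
Qed.

Lemma D_E1 n (r : 'S_n) : Dstat (E1 r) = Dstat r.
Proof.
rewrite /Dstat sum_recr E1_max /natdist subnn addn0 addn0.
by apply: eq_bigr => k _; rewrite E1_lift !lift_max.
Qed.

Lemma I_E1 n (r : 'S_n) : Istat (E1 r) = Istat r.
Proof.
rewrite !IstatE sum_recr.
have -> : row (E1 r) ord_max = 0.
  by apply: big1 => q _; rewrite /inv maxlt.
rewrite addn0; apply: eq_bigr => k _.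
rewrite /row sum_recr /inv E1_max maxlt andbF addn0.
by apply: eq_bigr => j _; rewrite !E1_lift !lift_max.
Qed.

Lemma T_E1 n (r : 'S_n) : Tstat (E1 r) = Tstat r.
Proof. by rewrite /Tstat cyc_lift subSS. Qed.

Lemma shallow_E1 n (r : 'S_n) : shallow (E1 r) = shallow r.
Proof. by rewrite /shallow D_E1 I_E1 T_E1. Qed.

Lemma invo_E1 n (r : 'S_n) : involution (E1 r) = involution r.
Proof.
rewrite !invoP; apply/forallP/forallP => H x.
  by have := H (lift ord_max x); rewrite !E1_lift (inj_eq (@lift_inj _ _)).
case: (unliftP ord_max x) => [k ->|->]; last by rewrite !E1_max.
by rewrite !E1_lift (inj_eq (@lift_inj _ _)).
Qed.

Lemma cont_E1 n (r : 'S_n) : cont (E1 r) = cont r.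
Proof.
apply/existsP/existsP => [[a /existsP [b /existsP [c /and4P [h1 h2 h3 h4]]]]|
  [a /existsP [b /existsP [c /and4P [h1 h2 h3 h4]]]]]; last first.
  exists (lift ord_max a); apply/existsP; exists (lift ord_max b).
  apply/existsP; exists (lift ord_max c).
  by rewrite !E1_lift !lift_max h1 h2 h3 h4.
move: h1 h2 h3 h4.
case: (unliftP ord_max c) => [c' ->|->]; last first.
  by rewrite E1_max => _ _ _; rewrite maxlt.
case: (unliftP ord_max b) => [b' ->|->]; last first.
  by move=> _; rewrite maxlt.
case: (unliftP ord_max a) => [a' ->|->]; last first.
  by rewrite maxlt.
rewrite !E1_lift !lift_max => h1 h2 h3 h4.
exists a'; apply/existsP; exists b'; apply/existsP; exists c'.
by rewrite h1 h2 h3 h4.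
Qed.

Definition E0 n (r : 'S_n.+1) : 'S_n.+2 := lift_perm ord0 ord0 r.
Definition E2 n (r : 'S_n) : 'S_n.+2 := (tperm ord0 ord_max * E0 (E1 r))%g.
Definition sh n (k : 'I_n) : 'I_n.+2 := lift ord0 (lift ord_max k).

Lemma sh_val n (k : 'I_n) : (sh k : nat) = k.+1.
Proof. by rewrite /sh lift0 lift_max. Qed.

Lemma sh_inj n : injective (@sh n).
Proof. by move=> k k' /(congr1 (@nat_of_ord _)); rewrite !sh_val => -[] /val_inj. Qed.

Lemma max_lift0 n : (ord_max : 'I_n.+2) = lift ord0 ord_max.
Proof. by apply: val_inj; rewrite /= /bump add1n. Qed.

Lemma ordP n (x : 'I_n.+2) : x = ord0 \/ x = ord_max \/ exists k, x = sh k.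
Proof.
case: (unliftP ord0 x) => [y ->|->]; last by left.
case: (unliftP ord_max y) => [k ->|->]; last by right; left; rewrite max_lift0.
by right; right; exists k.
Qed.

Lemma E2_0 n (r : 'S_n) : E2 r ord0 = ord_max.
Proof. by rewrite /E2 permM tpermL max_lift0 /E0 lift_perm_lift E1_max. Qed.

Lemma E2_max n (r : 'S_n) : E2 r ord_max = ord0.
Proof. by rewrite /E2 permM tpermR /E0 lift_perm_id. Qed.

Lemma E2_sh n (r : 'S_n) k : E2 r (sh k) = sh (r k).
Proof.
rewrite /E2 permM tpermD; first by rewrite /E0 /sh lift_perm_lift E1_lift.
  by apply/eqP => /(congr1 (@nat_of_ord _)); rewrite sh_val.
apply/eqP => /(congr1 (@nat_of_ord _)); rewrite sh_val /= => -[E].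
by move: (ltn_ord k); rewrite -E ltnn.
Qed.

Lemma sum3 n (F : 'I_n.+2 -> nat) :
  \sum_(i < n.+2) F i = F ord0 + \sum_(k < n) F (sh k) + F ord_max.
Proof. by rewrite big_ord_recl sum_recr addnA -max_lift0. Qed.

Lemma D_E2 n (r : 'S_n) : Dstat (E2 r) = Dstat r + 2 * n.+1.
Proof.
rewrite /Dstat sum3 E2_0 E2_max.
have -> : \sum_(k < n) natdist (E2 r (sh k)) (sh k) = \sum_(k < n) natdist (r k) k.
  by apply: eq_bigr => k _; rewrite E2_sh !sh_val /natdist !subSS.
rewrite /natdist /=; lia.
Qed.

Lemma I_E2 n (r : 'S_n) : Istat (E2 r) = Istat r + (2 * n).+1.
Proof.
rewrite !IstatE sum3.
have -> : row (E2 r) ord_max = 0.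
  by apply: big1 => q _; rewrite /inv maxlt.
have -> : row (E2 r) ord0 = n.+1.
  rewrite /row sum3 /inv E2_0 E2_max /=.
  rewrite (eq_bigr (fun _ => 1)); last first.
    by move=> k _; rewrite E2_sh !sh_val /= ltnS ltn_ord.
  by rewrite sum_nat_const card_ord muln1 addn1.
have -> : \sum_(k < n) row (E2 r) (sh k) = \sum_(k < n) (row r k + 1).
  apply: eq_bigr => k _; rewrite /row sum3 /inv E2_0 E2_max E2_sh.
  under eq_bigr => j _ do rewrite E2_sh !sh_val !ltnS.
  by rewrite !sh_val /= ltnS ltn_ord /= add0n.
rewrite big_split /= sum1_card card_ord; lia.
Qed.

Lemma cyc_E2 n (r : 'S_n) : cyc (E2 r) = (cyc r).+1.
Proof.
have H1 : cyc (E0 (E1 r)) = (cyc r).+2 by rewrite /E0 cyc_lift /E1 cyc_lift.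
have := porbits_mul_tperm (E0 (E1 r)) ord0 ord_max.
rewrite porbit_fix; last by rewrite max_lift0 /E0 lift_perm_lift E1_max.
rewrite in_set1 -val_eqE /= => H.
change (cyc (E2 r) + 2 = cyc (E0 (E1 r)) + 1) in H.
lia.
Qed.

Lemma T_E2 n (r : 'S_n) : Tstat (E2 r) = (Tstat r).+1.
Proof. have := cyc_le r; rewrite /Tstat cyc_E2; lia. Qed.

Lemma shallow_E2 n (r : 'S_n) : shallow (E2 r) = shallow r.
Proof. rewrite /shallow D_E2 I_E2 T_E2; apply/eqP/eqP; lia. Qed.

Lemma invo_E2 n (r : 'S_n) : involution (E2 r) = involution r.
Proof.
rewrite !invoP; apply/forallP/forallP => H x.
  by have := H (sh x); rewrite !E2_sh (inj_eq (@sh_inj _)).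
case: (ordP x) => [->|[->|[k ->]]].
- by rewrite E2_0 E2_max.
- by rewrite E2_max E2_0.
by rewrite !E2_sh (inj_eq (@sh_inj _)).
Qed.

Lemma cont_E2 n (r : 'S_n) : cont (E2 r) = cont r.
Proof.
apply/existsP/existsP => [[a /existsP [b /existsP [c /and4P [h1 h2 h3 h4]]]]|
  [a /existsP [b /existsP [c /and4P [h1 h2 h3 h4]]]]]; last first.
  exists (sh a); apply/existsP; exists (sh b).
  apply/existsP; exists (sh c).
  by rewrite !E2_sh !sh_val !ltnS h1 h2 h3 h4.
move: h1 h2 h3 h4.
case: (ordP c) => [->|[->|[c' ->]]]; first by move=> _ /=; rewrite ltn0.
  by rewrite E2_max => _ _ /=; rewrite ltn0.
case: (ordP b) => [->|[->|[b' ->]]]; first by rewrite /= ltn0.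
  by rewrite maxlt.
case: (ordP a) => [->|[->|[a' ->]]].
- by rewrite E2_0 maxlt.
- by rewrite maxlt.
rewrite !E2_sh !sh_val !ltnS => h1 h2 h3 h4.
exists a'; apply/existsP; exists b'; apply/existsP; exists c'.
by rewrite h1 h2 h3 h4.
Qed.

Lemma restr n (i : 'I_n.+1) (u : 'S_n.+1) : u i = i ->
  exists r : 'S_n, u = lift_perm i i r.
Proof.
move=> Hi.
have Hf : forall k, exists y, u (lift i k) = lift i y.
  move=> k; case: (unliftP i (u (lift i k))) => [y ->|E]; first by exists y.
  by move: E; rewrite -{2}Hi => /perm_inj E; move: (neq_lift i k); rewrite E eqxx.
pose f k := odflt k (unlift i (u (lift i k))).
have Hl : forall k, lift i (f k) = u (lift i k).
  by move=> k; have [y Hy] := Hf k; rewrite /f Hy liftK.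
have finj : injective f.
  by move=> k1 k2 E; apply: (@lift_inj _ i); apply: (@perm_inj _ u); rewrite -!Hl E.
exists (perm finj); apply/permP => x; case: (unliftP i x) => [k ->|->].
  by rewrite lift_perm_lift permE Hl.
by rewrite lift_perm_id.
Qed.

Lemma sum_eq1 N (i : 'I_N) x : \sum_(p < N) ((p == i) * x) = x.
Proof.
rewrite (bigD1 i) //= eqxx mul1n big1 ?addn0 // => p /negbTE ->.
by rewrite mul0n.
Qed.

Lemma ltn_max n (x : 'I_n.+1) : (x < n) = (x != ord_max).
Proof.
rewrite ltn_neqAle leq_ord andbT; apply/idP/idP; apply: contra.
  by move=> /eqP ->.
by move=> /eqP E; apply/eqP/val_inj.
Qed.

Section Step.
Variables (n : nat) (s : 'S_n.+1).
Hypothesis hs : s ord_max != ord_max.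
Let m := (s^-1)%g ord_max.
Let a := s ord_max.
Let s' := (tperm m ord_max * s)%g.

Lemma sm : s m = ord_max. Proof. exact: permKV. Qed.
Lemma m_neq : m != ord_max.
Proof. by apply: contra hs => /eqP E; rewrite -{1}E sm. Qed.
Lemma a_neq : a != ord_max. Proof. exact: hs. Qed.
Lemma s'm : s' m = a. Proof. by rewrite /s' permM tpermL. Qed.
Lemma s'max : s' ord_max = ord_max. Proof. by rewrite /s' permM tpermR sm. Qed.
Lemma s'p p : p != m -> p != ord_max -> s' p = s p.
Proof. by move=> h1 h2; rewrite /s' permM tpermD // eq_sym. Qed.

Lemma m_lt : m < n.
Proof.
rewrite ltn_neqAle leq_ord andbT; apply: contra m_neq => /eqP E.
by apply/eqP; apply: val_inj.
Qed.
Lemma a_lt : a < n.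
Proof.
rewrite ltn_neqAle leq_ord andbT; apply: contra a_neq => /eqP E.
by apply/eqP; apply: val_inj.
Qed.

Lemma stepT : cyc s' = (cyc s).+1.
Proof.
have := porbits_mul_tperm s m ord_max.
have -> : m \in porbit s ord_max.
  by rewrite porbit_sym; have := mem_porbit s 1 m; rewrite expg1 sm.
rewrite m_neq /= addn0 addn1; exact.
Qed.


Lemma stepD : Dstat s + natdist a m = Dstat s' + (n - m) + (n - a).
Proof.
rewrite /Dstat -(sum_eq1 m (natdist a m)) -(sum_eq1 m (n - m)).
rewrite -(sum_eq1 (@ord_max n) (n - a)) -!big_split /=.
apply: eq_bigr => p _.
have := m_lt; have := a_lt => h1 h2.
case: (eqVneq p m) => [->|hm].
  by rewrite sm s'm (negbTE m_neq) /natdist /=; lia.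
case: (eqVneq p ord_max) => [->|hx].
  by rewrite s'max -/a /natdist /=; lia.
by rewrite s'p //; lia.
Qed.

Lemma rowm : row s m = n - m.
Proof.
rewrite /row /inv sm.
rewrite (eq_bigr (fun q : 'I_n.+1 => ((m.+1 <= q) && (q < n.+1) : nat))).
  by rewrite sum_interval minnn subSS.
move=> q _; case: (eqVneq q m) => [->|hq]; first by rewrite ltnn.
rewrite ltn_ord andbT /=.
have : s q != ord_max by rewrite -sm (inj_eq (@perm_inj _ s)).
suff -> : (s q < n) = (s q != ord_max) by move=> ->; rewrite andbT.
rewrite ltn_neqAle leq_ord andbT; apply/idP/idP; apply: contra.
  by move=> /eqP ->.
by move=> /eqP E; apply/eqP/val_inj.
Qed.

Lemma rowmax n0 (u : 'S_n0.+1) : row u ord_max = 0.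
Proof. by apply: big1 => q _; rewrite /inv maxlt. Qed.

Lemma rowp p : p != m -> p != ord_max ->
  row s p + ((p < m) && (a < s p)) = row s' p + (a < s p).
Proof.
move=> hm hx.
rewrite /row -(sum_eq1 m ((p < m) && (a < s p))) -(sum_eq1 (@ord_max n) (a < s p)).
rewrite -!big_split /=; apply: eq_bigr => q _.
rewrite /inv (s'p hm hx).
case: (eqVneq q m) => [->|hqm].
  by rewrite sm s'm maxlt andbF (negbTE m_neq) mul0n mul1n add0n addn0.
case: (eqVneq q ord_max) => [->|hqx].
  rewrite s'max maxlt andbF /=.
  have -> : p < n by rewrite ltn_max.
  by rewrite /a mul1n mul0n addn0.
by rewrite s'p // !mul0n.
Qed.

Definition cc := \sum_(p < n.+1) ((m < p) && (a < s p) : nat).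

Lemma stepI : Istat s + row s' m = Istat s' + (n - m) + cc.
Proof.
rewrite !IstatE /cc -(sum_eq1 m (row s' m)) -(sum_eq1 m (n - m)) -!big_split /=.
apply: eq_bigr => p _.
case: (eqVneq p m) => [->|hm].
  by rewrite rowm ltnn /= !mul1n addn0 addnC.
case: (eqVneq p ord_max) => [->|hx].
  by rewrite !rowmax -/a ltnn andbF !mul0n.
rewrite !mul0n !addn0.
have := rowp hm hx.
case: (ltngtP p m) => hpm /=;
  [| | by move: hm; rewrite -val_eqE /= hpm eqxx]; case: (a < s p) => /=; lia.
Qed.

Lemma split : cc + row s' m = n - m - 1.
Proof.
have -> : n - m - 1 = minn n n.+1 - m.+1 by rewrite (minn_idPl (leqnSn n)); lia.
rewrite -sum_interval /cc /row /inv s'm -big_split /=; apply: eq_bigr => q _.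
rewrite /inv.
case: (eqVneq q ord_max) => [->|hx].
  rewrite s'max /a ltnn andbF /= ltnn andbF.
  by rewrite maxlt andbF.
have hq : q < n.
  by rewrite ltn_neqAle -ltnS ltn_ord andbT; apply: contra hx => /eqP E; apply/eqP/val_inj.
have hsq : s q != a by rewrite /a (inj_eq (@perm_inj _ s)).
case: (eqVneq q m) => [->|hm]; first by rewrite ltnn.
rewrite s'p // hq andbT.
case: (m < q) => //=.
by case: (ltngtP a (s q)) => // E; move: hsq; rewrite -val_eqE /= E eqxx.
Qed.

Lemma cbound : cc + 1 <= n - a.
Proof.
have -> : n - a = \sum_(p < n.+1) (a < s p).
  have -> : \sum_(p < n.+1) (a < s p : nat) = \sum_(p < n.+1) (a < p : nat).
    by rewrite [RHS](reindex_inj (@perm_inj _ s)).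
  rewrite (eq_bigr (fun q : 'I_n.+1 => ((a.+1 <= q) && (q < n.+1) : nat))).
    by rewrite sum_interval minnn subSS.
  by move=> q _; rewrite ltn_ord andbT.
rewrite /cc -(sum_eq1 m 1) -big_split /=; apply: leq_sum => p _.
case: (eqVneq p m) => [->|hm]; last by rewrite mul0n addn0; case: (m < p); case: (a < s p).
by rewrite ltnn sm /= a_lt.
Qed.

End Step.


Lemma DG n (s : 'S_n) : Istat s + Tstat s <= Dstat s.
Proof.
elim: n s => [|n IH] s.
  by rewrite IstatE /Dstat /Tstat !big_ord0.
case: (eqVneq (s ord_max) ord_max) => hs.
  have [r ->] := restr hs.
  by rewrite -/(E1 r) I_E1 T_E1 D_E1; exact: IH.
have [r Hr] := restr (s'max s).
have := IH r; rewrite -I_E1 -T_E1 -D_E1 /E1 -Hr.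
have := stepI hs; have := stepD hs; have := split hs; have := cbound hs.
have := stepT hs; have := cyc_le s; have := cyc_le (tperm (s^-1 ord_max)%g ord_max * s)%g.
have := m_lt hs; have := a_lt hs.
rewrite /Tstat /natdist; lia.
Qed.

Definition V n := [set s : 'S_n | [&& shallow s, avoids [:: 1; 3; 2] s & involution s]].

Lemma valid_E1 n (r : 'S_n) : (E1 r \in V n.+1) = (r \in V n).
Proof. by rewrite !inE /avoids !contE shallow_E1 cont_E1 invo_E1. Qed.

Lemma valid_E2 n (r : 'S_n) : (E2 r \in V n.+2) = (r \in V n).
Proof. by rewrite !inE /avoids !contE shallow_E2 cont_E2 invo_E2. Qed.

Lemma bad n (s : 'S_n.+1) : s \in V n.+1 -> s ord_max != ord_max -> s ord0 = ord_max.
Proof.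
rewrite inE /avoids contE invoP => /and3P [Hsh Hc /forallP Hi] hs.
apply/eqP/negPn/negP => h0.
set m := (s^-1)%g ord_max.
have sm : s m = ord_max := sm s.
have am : s ord_max = m by rewrite -sm; apply/eqP; exact: Hi.
have m0 : m != ord0 by apply: contra h0 => /eqP <-; rewrite sm.
have mpos : 0 < m by rewrite lt0n; apply: contra m0 => /eqP E; apply/eqP/val_inj.
have mlt := m_lt hs.
set q0 := s ord0.
have sq0 : s q0 = ord0 by apply/eqP; exact: Hi.
have q0m : m < q0.
  case: (ltngtP m q0) => // H; exfalso.
    move/negP: Hc; apply; apply/existsP; exists ord0; apply/existsP; exists m.
    apply/existsP; exists ord_max.
    by rewrite mpos /= mlt am sm H /=.
  have : q0 = m by apply/val_inj.
  move=> E; move: sq0; rewrite E sm => /(congr1 (@nat_of_ord _)) /= En.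
  by move: mlt; rewrite -/m; lia.
have q0x : q0 != ord_max by [].
have q0m' : q0 != m by rewrite -val_eqE /= neq_ltn q0m orbT.
have R1 : 1 <= row (tperm m ord_max * s)%g m.
  rewrite /row (bigD1 q0) //= /inv q0m s'm // s'p // sq0 -/m am /= mpos.
  by rewrite addSn.
have := stepI hs; have := stepD hs; have := split hs; have := cbound hs.
have := stepT hs; have := cyc_le s; have := cyc_le (tperm (s^-1 ord_max)%g ord_max * s)%g.
have := a_lt hs.
have [r Hr] := restr (s'max s).
have := DG r; rewrite -I_E1 -T_E1 -D_E1 /E1 -Hr.
move/eqP: Hsh; rewrite -/m am.
rewrite /Tstat /natdist; lia.
Qed.

Lemma E1_inj n : injective (@E1 n).
Proof.
move=> r1 r2 E; apply/permP => k; apply: (@lift_inj _ ord_max).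
by rewrite -!E1_lift E.
Qed.

Lemma E2_inj n : injective (@E2 n).
Proof.
move=> r1 r2 E; apply/permP => k; apply: (@sh_inj n).
by rewrite -!E2_sh E.
Qed.

Lemma V_rec n : V n.+2 = (@E1 n.+1) @: V n.+1 :|: (@E2 n) @: V n.
Proof.
apply/setP => s; rewrite in_setU; apply/idP/orP => [Hs|]; last first.
  case=> /imsetP [r Hr ->]; [by rewrite valid_E1 | by rewrite valid_E2].
case: (eqVneq (s ord_max) ord_max) => hs.
  have [r Er] := restr hs; left; apply/imsetP; exists r => //.
  by rewrite -valid_E1 /E1 -Er.
right; have h0 := bad Hs hs.
have hm : s ord_max = ord0.
  move: Hs; rewrite inE invoP => /and3P [_ _ /forallP Hi].
  by have := Hi ord0; rewrite h0 => /eqP.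
set w := (tperm ord0 ord_max * s)%g.
have w0 : w ord0 = ord0 by rewrite /w permM tpermL.
have [w1 Ew1] := restr w0.
have w1m : w1 ord_max = ord_max.
  apply: (@lift_inj _ ord0); rewrite -(lift_perm_lift ord0 ord0 w1) -Ew1 -max_lift0.
  by rewrite /w permM tpermR.
have [r Er] := restr w1m.
have Es : s = E2 r.
  by rewrite /E2 /E0 /E1 -Er -Ew1 /w tpermKg.
apply/imsetP; exists r => //.
by rewrite -valid_E2 -Es.
Qed.

Lemma card_rec n : #|V n.+2| = #|V n.+1| + #|V n|.
Proof.
rewrite V_rec cardsU !card_imset; try exact: E1_inj; try exact: E2_inj.
suff -> : (@E1 n.+1) @: V n.+1 :&: (@E2 n) @: V n = set0 by rewrite cards0 subn0.
apply/setP => s; rewrite !inE; apply/negP => /andP [/imsetP [r1 _ ->] /imsetP [r2 _ E]].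
move: (congr1 (fun u : 'S_n.+2 => u ord_max) E); rewrite E1_max E2_max.
by move=> /(congr1 (@nat_of_ord _)).
Qed.

Lemma valid0 (s : 'S_0) : s \in V 0.
Proof.
rewrite inE /shallow /avoids contE invoP IstatE /Dstat /Tstat !big_ord0 /=.
apply/andP; split.
  by apply/negP => /existsP [[]].
by apply/forallP => -[].
Qed.

Lemma card_V0 : #|V 0| = 1.
Proof.
have -> : V 0 = [set: 'S_0] by apply/setP => s; rewrite valid0 in_setT.
by rewrite cardsT card_Sn.
Qed.

Lemma card_V1 : #|V 1| = 1.
Proof.
have -> : V 1 = (@E1 0) @: V 0.
  apply/setP => s; apply/idP/imsetP => [Hs|[r _ ->]]; last by rewrite valid_E1 valid0.
  have [r Er] : exists r : 'S_0, s = lift_perm ord_max ord_max r.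
    by apply: restr; rewrite (ord1 (s ord_max)); apply/val_inj.
  by exists r; [exact: valid0 | exact: Er].
by rewrite card_imset ?card_V0 //; exact: E1_inj.
Qed.

Lemma card_V n : #|V n| = fib n.+1.
Proof.
suff : #|V n| = fib n.+1 /\ #|V n.+1| = fib n.+2 by case.
elim: n => [|n [IH1 IH2]]; first by rewrite card_V0 card_V1.
by split => //; rewrite card_rec IH1 IH2 /= addnC.
Qed.

Theorem theorem3p6 (n : nat) (hn : 1 <= n) :
  #|[set s : 'S_n | [&& shallow s, avoids [:: 1; 3; 2] s & involution s]]|
  = fib n.+1.
Proof. exact: card_V. Qed.
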